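(* Let $A$, $c$, $d$ be positive integers such that $A^2 - 2cA - d$ is the square of an integer. Then $2A \leq (c+1)^2 + d$. *)

(* Defs.v *)
From Stdlib Require Import ZArith Lia.

(* Main.v *)
Require Import Defs.
From Stdlib Require Import ZArith Lia.
Open Scope Z_scope.

Theorem lemma4 (A c d : Z) (hA : 0 < A) (hc : 0 < c) (hd : 0 < d)
  (hsq : exists m : Z, A ^ 2 - 2 * c * A - d = m ^ 2) :
  2 * A <= (c + 1) ^ 2 + d.
Proof.
  destruct hsq as [m hm].
  set (k := Z.abs m).
  assert (hk : m ^ 2 = k * k) by (unfold k; rewrite Z.pow_2_r; destruct (Z.abs_spec m) as [[_ ->]|[_ ->]]; ring).
  assert (hk0 : 0 <= k) by (unfold k; lia).
  rewrite hk in hm. clearbody k.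
  assert (h2c : A > 2 * c) by nia.
  set (u := A - c - k). set (v := A - c + k).
  assert (huv : u * v = c * c + d) by (unfold u, v; nia).
  assert (hv : v > 0) by (unfold v; lia).
  assert (hu : u >= 1) by nia.
  assert (hs : u + v <= u * v + 1) by nia.
  unfold u, v in *. nia.
Qed.
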